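(* For every $z\in\Omega_\theta$ the following hold: (a) $\|W\|_F^2\le \theta/\lambda_2$, $\|V\|_1\le \theta/\lambda_1$ and $\|b_+\|_\infty\le\alpha$, where $b_+=(b)_+$; (b) $\bar z=\mathrm{Proj}_{\Omega_3}(z)$ belongs to $\mathcal{Z}$ and $\mathcal{O}(\bar z)=\mathcal{O}(z)$. Moreover, the set $\mathcal{Z}^*$ of global minimizers of problem (LRP) is nonempty and bounded, and $\mathcal{Z}^*\subset\mathcal{S}$, where $\mathcal{S}$ is the set of global minimizers of problem (RP).
   Context: Let $N,N_0,N_1$ be positive integers, $X=(x_1,\ldots,x_N)\in\mathbb{R}^{N_0\times N}$ a given data matrix, and $\lambda_1,\lambda_2,\beta>0$ given parameters. For a real vector $y$, $(y)_+=\max\{y,0\}$ componentwise; $e$ denotes the all-ones vector of $\mathbb{R}^{N_1}$. For a matrix $Y$, $\|Y\|_F$ is the Frobenius norm and $\|Y\|_1$ the maximum absolute column sum. The variable is $z=(\mathrm{vec}(W)^\top,b^\top,\mathrm{vec}(V)^\top)^\top\in\mathbb{R}^{N_2}$, $N_2=N_0N_1+N_1+N_0+N_1N$, where $W\in\mathbb{R}^{N_1\times N_0}$, $b=(b_1^\top,b_2^\top)^\top$ with $b_1\in\mathbb{R}^{N_1}$, $b_2\in\mathbb{R}^{N_0}$, $V=(v_1,\ldots,v_N)\in\mathbb{R}^{N_1\times N}$, and vec is columnwise vectorization. Define $\mathcal{F}(z)=\frac1N\sum_{n=1}^N\|(W^\top v_n+b_2)_+-x_n\|_2^2$, $\mathcal{R}(z)=\lambda_1\sum_{n=1}^N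 e^\top v_n+\lambda_2\|W\|_F^2$, $\mathcal{P}(z)=\beta\sum_{n=1}^N e^\top(v_n-(Wx_n+b_1)_+)$, and $\mathcal{O}=\mathcal{F}+\mathcal{R}+\mathcal{P}$. Let $\Omega_2=\{z: v_n\ge (Wx_n+b_1)_+,\ n=1,\ldots,N\}$. Fix $\theta>\frac1N\|X\|_F^2$ and set $\alpha=\max\left\{\frac{\theta}{\lambda_1}+\sqrt{\frac{N_1N_0\theta}{\lambda_2}}\|X\|_1,\ \frac{\theta\sqrt{N_1N_0\theta}}{\lambda_1\sqrt{\lambda_2}}+\sqrt{N\theta}+\|X\|_1\right\}$. Let $\Omega_3=\{z:\|b\|_\infty\le\alpha\}$, $\mathcal{Z}=\Omega_2\cap\Omega_3$, $\Omega_\theta=\{z\in\Omega_2:\mathcal{O}(z)\le\theta\}$, and $\mathrm{Proj}_{\Omega_3}$ the Euclidean projection onto the convex set $\Omega_3$. Problem (RP) is: minimize $\mathcal{O}(z)$ subject to $z\in\Omega_2$. Problem (LRP) is: minimize $\mathcal{O}(z)$ subject to $z\in\mathcal{Z}$. *)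

(* Defs.v *)
From HB Require Import structures.
From mathcomp Require Import all_boot all_order all_algebra.
From mathcomp Require Import reals.
Set Implicit Arguments. Unset Strict Implicit. Unset Printing Implicit Defensive.
Import Order.TTheory GRing.Theory Num.Theory.
Local Open Scope ring_scope.

Section Defs.
Variables (R : realType) (N0 N1 N : nat).

(* z = (W, b1, b2, V); b = (b1; b2) *)
Definition zT : Type :=
  ('M[R]_(N1, N0) * 'cV[R]_N1 * 'cV[R]_N0 * 'M[R]_(N1, N))%type.

Definition zW (z : zT) : 'M[R]_(N1, N0) := z.1.1.1.
Definition zb1 (z : zT) : 'cV[R]_N1 := z.1.1.2.
Definition zb2 (z : zT) : 'cV[R]_N0 := z.1.2.
Definition zV (z : zT) : 'M[R]_(N1, N) := z.2.

Definition pospart m n (A : 'M[R]_(m, n)) : 'M[R]_(m, n) :=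
  map_mx (fun t => Num.max t 0) A.

Definition frob2 m n (A : 'M[R]_(m, n)) : R :=
  \sum_(i < m) \sum_(j < n) A i j ^+ 2.

Definition norm1 m n (A : 'M[R]_(m, n)) : R :=
  \big[Num.max/0]_(j < n) \sum_(i < m) `|A i j|.

Definition norminf m (v : 'cV[R]_m) : R :=
  \big[Num.max/0]_(i < m) `|v i 0|.

Definition binf (z : zT) : R := Num.max (norminf (zb1 z)) (norminf (zb2 z)).

Definition bposinf (z : zT) : R :=
  Num.max (norminf (pospart (zb1 z))) (norminf (pospart (zb2 z))).

Definition dist2 (z y : zT) : R :=
  frob2 (zW z - zW y) + frob2 (zb1 z - zb1 y) + frob2 (zb2 z - zb2 y)
  + frob2 (zV z - zV y).

Variables (X : 'M[R]_(N0, N)) (lam1 lam2 beta : R).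

Definition objF (z : zT) : R :=
  N%:R^-1 * \sum_(n < N)
     frob2 (pospart ((zW z)^T *m col n (zV z) + zb2 z) - col n X).

Definition objR (z : zT) : R :=
  lam1 * (\sum_(n < N) \sum_(i < N1) zV z i n) + lam2 * frob2 (zW z).

Definition objP (z : zT) : R :=
  beta * \sum_(n < N) \sum_(i < N1)
     (zV z i n - pospart (zW z *m col n X + zb1 z) i 0).

Definition objO (z : zT) : R := objF z + objR z + objP z.

Definition Omega2 (z : zT) : Prop :=
  forall (n : 'I_N) (i : 'I_N1),
    pospart (zW z *m col n X + zb1 z) i 0 <= zV z i n.

Definition Omega3 (alpha : R) (z : zT) : Prop := binf z <= alpha.

Definition Zset (alpha : R) (z : zT) : Prop := Omega2 z /\ Omega3 alpha z.

Definition Omega_theta (theta : R) (z : zT) : Prop :=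
  Omega2 z /\ objO z <= theta.

Definition alpha_of (theta : R) : R :=
  Num.max (theta / lam1 + Num.sqrt ((N1 * N0)%:R * theta / lam2) * norm1 X)
          (theta * Num.sqrt ((N1 * N0)%:R * theta) / (lam1 * Num.sqrt lam2)
             + Num.sqrt (N%:R * theta) + norm1 X).

Definition is_proj_Omega3 (alpha : R) (z zbar : zT) : Prop :=
  Omega3 alpha zbar /\ forall y, Omega3 alpha y -> dist2 z zbar <= dist2 z y.

Definition LRP_minimizer (alpha : R) (z : zT) : Prop :=
  Zset alpha z /\ forall y, Zset alpha y -> objO z <= objO y.

Definition RP_minimizer (z : zT) : Prop :=
  Omega2 z /\ forall y, Omega2 y -> objO z <= objO y.

End Defs.

(* Main.v *)
Require Import Defs.
From HB Require Import structures.
From mathcomp Require Import all_boot all_order all_algebra.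
From mathcomp Require Import all_classical all_reals all_analysis.
From mathcomp Require Import ring lra.
Set Implicit Arguments. Unset Strict Implicit. Unset Printing Implicit Defensive.
Import Order.TTheory GRing.Theory Num.Theory.
Import numFieldNormedType.Exports.
Local Open Scope classical_set_scope.
Local Open Scope ring_scope.

Section Alg.
Variable R : realType.

Lemma sum_ge_term (I : finType) (F : I -> R) j :
  (forall i, 0 <= F i) -> F j <= \sum_i F i.
Proof. by move=> h; rewrite (bigD1 j) //= lerDl sumr_ge0. Qed.

Lemma frob2_ge0 m n (A : 'M[R]_(m, n)) : 0 <= frob2 A.
Proof. by apply: sumr_ge0 => i _; apply: sumr_ge0 => j _; exact: sqr_ge0. Qed.

Lemma frob2_entry m n (A : 'M[R]_(m, n)) i j : A i j ^+ 2 <= frob2 A.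
Proof.
have h1 := sum_ge_term (F:=fun k => \sum_l A k l ^+ 2) i
  (fun k => sumr_ge0 _ (fun l _ => sqr_ge0 (A k l))).
have h2 := sum_ge_term (F:=fun l => A i l ^+ 2) j (fun l => sqr_ge0 (A i l)).
exact: le_trans h2 h1.
Qed.

Lemma norminf_le m (v : 'cV[R]_m) a : 0 <= a ->
  (forall i, `|v i 0| <= a) -> norminf v <= a.
Proof. by move=> a0 h; apply: bigmax_le => // i _; exact: h. Qed.

Lemma norminf_entry m (v : 'cV[R]_m) i : `|v i 0| <= norminf v.
Proof. exact: (le_bigmax _ (fun i => `|v i 0|)). Qed.

Lemma norm1_ge0 m n (A : 'M[R]_(m, n)) : 0 <= norm1 A.
Proof.
rewrite /norm1; elim/big_ind: _ => [//|x y hx hy|i _].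
  by rewrite le_max hx.
by apply: sumr_ge0 => k _.
Qed.

Lemma norm1_col m n (A : 'M[R]_(m, n)) j : \sum_i `|A i j| <= norm1 A.
Proof. exact: (le_bigmax _ (fun j => \sum_i `|A i j|)). Qed.

Lemma sqrt_bound (t c : R) : t ^+ 2 <= c -> `|t| <= Num.sqrt c.
Proof. by move=> h; rewrite -sqrtr_sqr ler_wsqrtr. Qed.

Lemma frob2_le_const m n (A : 'M[R]_(m, n)) B :
  (forall i j, `|A i j| <= B) -> frob2 A <= frob2 (const_mx B : 'M[R]_(m, n)).
Proof.
move=> h; apply: ler_sum => i _; apply: ler_sum => j _; rewrite mxE.
have := h i j; rewrite ler_norml => /andP[h1 h2]; nra.
Qed.
End Alg.

Section Cont.
Variables (R : realType) (T : topologicalType).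
Implicit Types f g : T -> R.

Lemma cD f g : continuous f -> continuous g -> continuous (fun t => f t + g t).
Proof. by move=> hf hg x; exact: (@continuousD R R^o T f g x (hf x) (hg x)). Qed.
Lemma cM f g : continuous f -> continuous g -> continuous (fun t => f t * g t).
Proof. by move=> hf hg x; exact: (continuousM (hf x) (hg x)). Qed.
Lemma cN f : continuous f -> continuous (fun t => - f t).
Proof. by move=> hf x; exact: (@continuousN R R^o T f x (hf x)). Qed.
Lemma cC (a : R) : continuous (fun _ : T => a).
Proof. by move=> x; apply: cst_continuous. Qed.
Lemma cMax f g : continuous f -> continuous g -> continuous (fun t => Num.max (f t) (g t)).
Proof. by move=> hf hg x; exact: (continuous_max (hf x) (hg x)). Qed.
Lemma cAbs f : continuous f -> continuous (fun t => `|f t|).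
Proof. by move=> hf x; apply: continuous_comp (hf x) (@norm_continuous _ R^o _). Qed.

Lemma cSum n (F : 'I_n -> T -> R) : (forall i, continuous (F i)) ->
  continuous (fun t => \sum_(i < n) F i t).
Proof.
move=> h; elim: n F h => [|n IH] F h.
  by under eq_fun => t do rewrite big_ord0; exact: cC.
under eq_fun => t do rewrite big_ord_recr /=.
apply: cD; last exact: h.
exact: (IH (fun i => F (widen_ord (leqnSn n) i))).
Qed.

Lemma cBigmax n (F : 'I_n -> T -> R) : (forall i, continuous (F i)) ->
  continuous (fun t => \big[Num.max/0]_(i < n) F i t).
Proof.
move=> h; elim: n F h => [|n IH] F h.
  by under eq_fun => t do rewrite big_ord0; exact: cC.
under eq_fun => t do rewrite big_ord_recl.
apply: cMax; first exact: h.
exact: (IH (fun i => F (lift ord0 i))).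
Qed.

Definition mcont m n (F : T -> 'M[R]_(m, n)) := forall i j, continuous (fun t => F t i j).

Lemma mcD m n (F G : T -> 'M[R]_(m, n)) : mcont F -> mcont G -> mcont (fun t => F t + G t).
Proof. by move=> hF hG i j; under eq_fun => t do rewrite mxE; exact: cD. Qed.

Lemma mcB m n (F G : T -> 'M[R]_(m, n)) : mcont F -> mcont G -> mcont (fun t => F t - G t).
Proof.
move=> hF hG i j; under eq_fun => t do rewrite !mxE.
by apply: cD => //; exact: cN.
Qed.

Lemma mcC m n (A : 'M[R]_(m, n)) : mcont (fun _ => A).
Proof. by move=> i j; exact: cC. Qed.

Lemma mcT m n (F : T -> 'M[R]_(m, n)) : mcont F -> mcont (fun t => (F t)^T).
Proof. by move=> hF i j; under eq_fun => t do rewrite mxE; exact: hF. Qed.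

Lemma mcCol m n (F : T -> 'M[R]_(m, n)) k : mcont F -> mcont (fun t => col k (F t)).
Proof. by move=> hF i j; under eq_fun => t do rewrite mxE; exact: hF. Qed.

Lemma mcMul m n p (F : T -> 'M[R]_(m, n)) (G : T -> 'M[R]_(n, p)) :
  mcont F -> mcont G -> mcont (fun t => F t *m G t).
Proof.
move=> hF hG i j; under eq_fun => t do rewrite mxE.
by apply: cSum => k; apply: cM.
Qed.

Lemma mcPos m n (F : T -> 'M[R]_(m, n)) : mcont F -> mcont (fun t => pospart (F t)).
Proof.
by move=> hF i j; under eq_fun => t do rewrite mxE; apply: cMax => //; exact: cC.
Qed.

Lemma cFrob m n (F : T -> 'M[R]_(m, n)) : mcont F -> continuous (fun t => frob2 (F t)).
Proof.
move=> hF; apply: cSum => i; apply: cSum => j.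
by under eq_fun => t do rewrite expr2; apply: cM.
Qed.

Lemma cNorminf m (F : T -> 'cV[R]_m) : mcont F -> continuous (fun t => norminf (F t)).
Proof. by move=> hF; apply: cBigmax => i; apply: cAbs. Qed.

Lemma closed_le_fun f g : continuous f -> continuous g -> closed [set t | f t <= g t].
Proof.
move=> hf hg.
have -> : [set t | f t <= g t] = (fun t => g t - f t) @^-1` [set x : R | 0 <= x].
  by apply/seteqP; split => t /=; rewrite subr_ge0.
apply: preimage_closed; last exact: closed_ge.
by move=> t _; apply: cD => //; exact: cN.
Qed.

Lemma closed_forall (I : Type) (P : I -> set T) : (forall i, closed (P i)) ->
  closed [set t | forall i, P i t].
Proof.
move=> h; have -> : [set t | forall i, P i t] = \bigcap_(i in setT) P i.
  by apply/seteqP; split => t /= H i; [move=> _; exact: H| exact: H].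
by apply: closed_bigI => i _; exact: h.
Qed.
End Cont.

Section Reshape.
Variables (R : realType) (N0 N1 N : nat).
Local Notation zT := (zT R N0 N1 N).
Local Notation KD := (((N1 * N0 + N1) + N0) + N1 * N)%N.

Definition gmap (v : 'rV[R]_KD) : zT :=
  (vec_mx (lsubmx (lsubmx (lsubmx v))), (rsubmx (lsubmx (lsubmx v)))^T,
   (rsubmx (lsubmx v))^T, vec_mx (rsubmx v)).

Definition fmap (z : zT) : 'rV[R]_KD :=
  row_mx (row_mx (row_mx (mxvec (zW z)) (zb1 z)^T) (zb2 z)^T) (mxvec (zV z)).

Lemma gf z : gmap (fmap z) = z.
Proof.
case: z => [[[W b1] b2] V].
by rewrite /gmap /fmap /zW /zb1 /zb2 /zV /= !row_mxKl !row_mxKr !mxvecK !trmxK.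
Qed.

Lemma coordC n (k : 'I_n) : continuous (fun v : 'rV[R]_n => v ord0 k).
Proof. exact: coord_continuous. Qed.

Lemma mcW : mcont (fun v => zW (gmap v)).
Proof. by move=> i j; under eq_fun => v do rewrite /gmap /zW /= !mxE; exact: coord_continuous. Qed.
Lemma mcb1 : mcont (fun v => zb1 (gmap v)).
Proof. by move=> i j; under eq_fun => v do rewrite /gmap /zb1 /= !mxE; exact: coord_continuous. Qed.
Lemma mcb2 : mcont (fun v => zb2 (gmap v)).
Proof. by move=> i j; under eq_fun => v do rewrite /gmap /zb2 /= !mxE; exact: coord_continuous. Qed.
Lemma mcV : mcont (fun v => zV (gmap v)).
Proof. by move=> i j; under eq_fun => v do rewrite /gmap /zV /= !mxE; exact: coord_continuous. Qed.

Lemma row_bound m n (A : 'rV[R]_m) (C : 'rV[R]_n) B :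
  (forall k, `|A ord0 k| <= B) -> (forall k, `|C ord0 k| <= B) ->
  forall k, `|row_mx A C ord0 k| <= B.
Proof.
move=> hA hC k; case: (split_ordP k) => j ->; [rewrite row_mxEl | rewrite row_mxEr]; by [].
Qed.

Lemma vec_bound m n (A : 'M[R]_(m, n)) B :
  (forall i j, `|A i j| <= B) -> forall k, `|mxvec A ord0 k| <= B.
Proof. by move=> h k; case/mxvec_indexP: k => i j; rewrite mxvecE. Qed.

Lemma tr_bound m (b : 'cV[R]_m) B :
  (forall i, `|b i 0| <= B) -> forall k, `|b^T ord0 k| <= B.
Proof. by move=> h k; rewrite mxE. Qed.

Lemma fmap_bound (z : zT) B :
  (forall i j, `|zW z i j| <= B) -> (forall i, `|zb1 z i 0| <= B) ->
  (forall i, `|zb2 z i 0| <= B) -> (forall i j, `|zV z i j| <= B) ->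
  forall k, `|fmap z ord0 k| <= B.
Proof.
move=> hW h1 h2 hV; apply: row_bound; last exact: vec_bound.
apply: row_bound; last exact: tr_bound.
apply: row_bound; [exact: vec_bound | exact: tr_bound].
Qed.
End Reshape.

Section Main.
Variables (R : realType) (N0 N1 N : nat) (X : 'M[R]_(N0, N)) (lam1 lam2 beta theta : R).
Hypotheses (HN : (0 < N)%N) (HN0 : (0 < N0)%N) (HN1 : (0 < N1)%N)
  (Hl1 : 0 < lam1) (Hl2 : 0 < lam2) (Hb : 0 < beta)
  (Hth : N%:R^-1 * frob2 X < theta).

Local Notation alpha := (alpha_of N1 X lam1 lam2 theta).
Local Notation O := (objO X lam1 lam2 beta).
Local Notation zT := (zT R N0 N1 N).

Lemma theta_gt0 : 0 < theta.
Proof.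
apply: le_lt_trans Hth; apply: mulr_ge0; last exact: frob2_ge0.
by rewrite invr_ge0.
Qed.

Let s := Num.sqrt (theta / lam2).

Lemma pospart_ge0 m n (A : 'M[R]_(m, n)) i j : 0 <= pospart A i j.
Proof. by rewrite mxE le_max lexx orbT. Qed.

Lemma V_ge0 (z : zT) : Omega2 X z -> forall i n, 0 <= zV z i n.
Proof. by move=> h i n; apply: le_trans (h n i); exact: pospart_ge0. Qed.

Lemma objF_ge0 (z : zT) : 0 <= objF X z.
Proof.
apply: mulr_ge0; first by rewrite invr_ge0.
by apply: sumr_ge0 => n _; exact: frob2_ge0.
Qed.

Lemma objP_ge0 (z : zT) : Omega2 X z -> 0 <= objP X beta z.
Proof.
move=> h; apply: mulr_ge0; first exact: ltW.
by apply: sumr_ge0 => n _; apply: sumr_ge0 => i _; rewrite subr_ge0; exact: h.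
Qed.

Definition sumV (z : zT) := \sum_(n < N) \sum_(i < N1) zV z i n.

Lemma sumV_ge0 (z : zT) : Omega2 X z -> 0 <= sumV z.
Proof.
by move=> h; apply: sumr_ge0 => n _; apply: sumr_ge0 => i _; exact: V_ge0.
Qed.

Lemma Rpart (z : zT) : Omega_theta X lam1 lam2 beta theta z ->
  lam1 * sumV z + lam2 * frob2 (zW z) <= theta.
Proof.
move=> [h2 hO]; apply: le_trans hO.
rewrite /objO /objR -/(sumV z).
have := objF_ge0 z; have := objP_ge0 h2; lra.
Qed.

Lemma W_bound (z : zT) : Omega_theta X lam1 lam2 beta theta z ->
  frob2 (zW z) <= theta / lam2.
Proof.
move=> h; have := Rpart h; have := sumV_ge0 h.1.
rewrite ler_pdivlMr //.
have := frob2_ge0 (zW z) => h0 h1 h3.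
have : 0 <= lam1 * sumV z by apply: mulr_ge0 => //; exact: ltW.
lra.
Qed.

Lemma sumV_bound (z : zT) : Omega_theta X lam1 lam2 beta theta z ->
  sumV z <= theta / lam1.
Proof.
move=> h; have := Rpart h.
rewrite ler_pdivlMr //.
have : 0 <= lam2 * frob2 (zW z) by apply: mulr_ge0; [exact: ltW|exact: frob2_ge0].
lra.
Qed.

Lemma colV_bound (z : zT) n : Omega_theta X lam1 lam2 beta theta z ->
  \sum_i zV z i n <= theta / lam1.
Proof.
move=> h; apply: le_trans (sumV_bound h).
apply: (sum_ge_term (F := fun n => \sum_i zV z i n)) => k.
by apply: sumr_ge0 => i _; exact: V_ge0 h.1 _ _.
Qed.

Lemma V_bound (z : zT) i n : Omega_theta X lam1 lam2 beta theta z ->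
  zV z i n <= theta / lam1.
Proof.
move=> h; apply: le_trans (colV_bound n h).
by apply: (sum_ge_term (F := fun i => zV z i n)) => k; exact: V_ge0 h.1 _ _.
Qed.

Lemma norm1V (z : zT) : Omega_theta X lam1 lam2 beta theta z ->
  norm1 (zV z) <= theta / lam1.
Proof.
move=> h; apply: bigmax_le => [|n _].
  by apply: divr_ge0; [exact: ltW theta_gt0| exact: ltW].
apply: le_trans (colV_bound n h); apply: ler_sum => i _.
by rewrite ger0_norm //; exact: V_ge0 h.1 _ _.
Qed.

Lemma Wentry (z : zT) i j : Omega_theta X lam1 lam2 beta theta z ->
  `|zW z i j| <= s.
Proof.
move=> h; apply: sqrt_bound; apply: le_trans (W_bound h); exact: frob2_entry.
Qed.

Lemma s_ge0 : 0 <= s. Proof. exact: sqrtr_ge0. Qed.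

Lemma u1_bound (z : zT) n i : Omega_theta X lam1 lam2 beta theta z ->
  `|(zW z *m col n X) i 0| <= s * norm1 X.
Proof.
move=> h; rewrite mxE; apply: le_trans (ler_norm_sum _ _ _) _.
apply: le_trans (ler_wpM2l s_ge0 (norm1_col X n)).
rewrite mulr_sumr; apply: ler_sum => k _; rewrite mxE normrM.
by apply: ler_wpM2r => //; exact: Wentry.
Qed.

Lemma u2_bound (z : zT) n j : Omega_theta X lam1 lam2 beta theta z ->
  `|((zW z)^T *m col n (zV z)) j 0| <= s * (theta / lam1).
Proof.
move=> h; rewrite mxE; apply: le_trans (ler_norm_sum _ _ _) _.
apply: le_trans (ler_wpM2l s_ge0 (colV_bound n h)).
rewrite mulr_sumr; apply: ler_sum => k _; rewrite !mxE normrM.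
rewrite (ger0_norm (V_ge0 h.1 _ _)).
by apply: ler_wpM2r; [exact: V_ge0 h.1 _ _|exact: Wentry].
Qed.

Lemma F_le (z : zT) : Omega_theta X lam1 lam2 beta theta z -> objF X z <= theta.
Proof.
move=> [h2 hO]; apply: le_trans hO; rewrite /objO /objR -/(sumV z).
have := objP_ge0 h2; have := sumV_ge0 h2; have := frob2_ge0 (zW z).
have := ltW Hl1; have := ltW Hl2; nra.
Qed.

Lemma L7 (z : zT) n j : Omega_theta X lam1 lam2 beta theta z ->
  pospart ((zW z)^T *m col n (zV z) + zb2 z) j 0 - X j n <= Num.sqrt (N%:R * theta).
Proof.
move=> h.
set M := pospart ((zW z)^T *m col n (zV z) + zb2 z) - col n X.
have e : pospart ((zW z)^T *m col n (zV z) + zb2 z) j 0 - X j n = M j 0.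
  by rewrite /M !mxE.
rewrite e; apply: le_trans (ler_norm _) _; apply: sqrt_bound.
apply: le_trans (frob2_entry M j 0) _.
have hF := F_le h; move: hF; rewrite /objF.
have hN : 0 < N%:R :> R by rewrite ltr0n.
set S := \sum_(n0 < N) _.
have hM : frob2 M <= S.
  by apply: (sum_ge_term (F := fun n0 => frob2 (pospart ((zW z)^T *m col n0 (zV z) + zb2 z) - col n0 X))) => k; exact: frob2_ge0.
move=> hF; apply: le_trans hM _.
have -> : S = N%:R * (N%:R^-1 * S) by rewrite mulrA divff ?mul1r // gt_eqF.
by rewrite ler_pM2l.
Qed.

Let c := (N1 * N0)%:R : R.
Lemma c_ge1 : 1 <= c. Proof. by rewrite /c ler1n muln_gt0 HN1 HN0. Qed.

Lemma A1 : theta / lam1 + s * norm1 X <= alpha.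
Proof.
rewrite /alpha_of le_max; apply/orP; left.
rewrite lerD2l; apply: ler_wpM2r; first exact: norm1_ge0.
apply: ler_wsqrtr; rewrite -/c -mulrA.
have : 0 <= theta / lam2 by apply: divr_ge0; [exact: ltW theta_gt0|exact: ltW].
have := c_ge1; nra.
Qed.

Lemma A2 : s * (theta / lam1) + Num.sqrt (N%:R * theta) + norm1 X <= alpha.
Proof.
rewrite /alpha_of le_max; apply/orP; right.
rewrite lerD2r lerD2r -/c.
have th0 := ltW theta_gt0.
rewrite /s sqrtrM // sqrtrV ?(ltW Hl2) // sqrtrM ?(le_trans _ c_ge1) //.
rewrite invfM.
have sc1 : 1 <= Num.sqrt c by rewrite -sqrtr1 ler_wsqrtr // c_ge1.
have hP : 0 <= theta * Num.sqrt theta * lam1^-1 * (Num.sqrt lam2)^-1.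
  apply: mulr_ge0; last by rewrite invr_ge0 sqrtr_ge0.
  apply: mulr_ge0; last by rewrite invr_ge0 ltW.
  by apply: mulr_ge0 => //; exact: sqrtr_ge0.
nra.
Qed.

Lemma th1_ge0 : 0 <= theta / lam1.
Proof. by apply: divr_ge0; [exact: ltW theta_gt0|exact: ltW]. Qed.

Lemma sn_ge0 : 0 <= s * norm1 X.
Proof. by apply: mulr_ge0; [exact: s_ge0|exact: norm1_ge0]. Qed.

Lemma alpha_ge0 : 0 <= alpha.
Proof. have := A1; have := th1_ge0; have := sn_ge0; lra. Qed.

Lemma pospartD m n (A B : 'M[R]_(m, n)) i j :
  pospart (A + B) i j = Num.max (A i j + B i j) 0.
Proof. by rewrite !mxE. Qed.

Lemma X_le_norm1 j n : X j n <= norm1 X.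
Proof.
apply: le_trans (ler_norm _) _; apply: le_trans (norm1_col X n).
by apply: (sum_ge_term (F := fun j => `|X j n|)) => k.
Qed.

Lemma u1_le (z : zT) n i : Omega_theta X lam1 lam2 beta theta z ->
  `|(zW z *m col n X) i 0| <= alpha.
Proof.
move=> h; have := u1_bound n i h; have := A1; have := th1_ge0; lra.
Qed.

Lemma u2_le (z : zT) n j : Omega_theta X lam1 lam2 beta theta z ->
  `|((zW z)^T *m col n (zV z)) j 0| <= alpha.
Proof.
move=> h; have := u2_bound n j h; have := A2; have := norm1_ge0 X.
have := sqrtr_ge0 (N%:R * theta); lra.
Qed.

Lemma P1 (z : zT) i : Omega_theta X lam1 lam2 beta theta z ->
  Num.max (zb1 z i 0) 0 <= alpha.
Proof.
move=> h; pose n0 := Ordinal HN.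
have k1 := h.1 n0 i; rewrite pospartD in k1.
have k2 := V_bound i n0 h.
have k3 := u1_bound n0 i h; move: k3; rewrite ler_norml => /andP[k3 k4].
have k5 : (zW z *m col n0 X) i 0 + zb1 z i 0 <= Num.max ((zW z *m col n0 X) i 0 + zb1 z i 0) 0.
  by rewrite le_max lexx.
have := A1; have := th1_ge0; have := sn_ge0 => *.
rewrite ge_max; apply/andP; split; lra.
Qed.

Lemma P2 (z : zT) j : Omega_theta X lam1 lam2 beta theta z ->
  Num.max (zb2 z j 0) 0 <= alpha.
Proof.
move=> h; pose n0 := Ordinal HN.
have k1 := L7 n0 j h; rewrite pospartD in k1.
have k2 := X_le_norm1 j n0.
have k3 := u2_bound n0 j h; move: k3; rewrite ler_norml => /andP[k3 k4].
have k5 : ((zW z)^T *m col n0 (zV z)) j 0 + zb2 z j 0 <= Num.max (((zW z)^T *m col n0 (zV z)) j 0 + zb2 z j 0) 0.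
  by rewrite le_max lexx.
have := A2; have := alpha_ge0 => *.
rewrite ge_max; apply/andP; split; lra.
Qed.

Lemma bpos_bound (z : zT) : Omega_theta X lam1 lam2 beta theta z ->
  bposinf z <= alpha.
Proof.
move=> h; rewrite /bposinf ge_max; apply/andP; split;
  apply: norminf_le; try exact: alpha_ge0; move=> i; rewrite mxE ger0_norm;
  try (by rewrite le_max lexx orbT).
- exact: P1.
- exact: P2.
Qed.

Definition clip (z : zT) : zT :=
  (zW z, map_mx (fun t => Num.max t (- alpha)) (zb1 z),
   map_mx (fun t => Num.max t (- alpha)) (zb2 z), zV z).

Lemma relu_clip (u b a : R) : `|u| <= a ->
  Num.max (u + Num.max b (- a)) 0 = Num.max (u + b) 0.
Proof.
rewrite ler_norml => /andP[h1 h2].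
case: (leP (- a) b) => hb //.
rewrite !max_r //; lra.
Qed.

Lemma clip_Omega2 (z : zT) : Omega_theta X lam1 lam2 beta theta z ->
  Omega2 X (clip z).
Proof.
move=> h n i; rewrite pospartD [map_mx _ _ i 0]mxE relu_clip; last exact: (u1_le n i h).
by rewrite -pospartD; exact: h.1.
Qed.

Lemma clip_obj (z : zT) : Omega_theta X lam1 lam2 beta theta z ->
  O (clip z) = O z.
Proof.
move=> h; rewrite /objO; congr (_ + _ + _).
- rewrite /objF; congr (_ * _); apply: eq_bigr => n _; congr (frob2 (_ - _)).
  apply/matrixP => j k; rewrite (ord1 k) !pospartD [map_mx _ _ j 0]mxE.
  by rewrite relu_clip //; exact: (u2_le n j h).
- rewrite /objP; congr (_ * _); apply: eq_bigr => n _; apply: eq_bigr => i _.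
  congr (_ - _); rewrite !pospartD [map_mx _ _ i 0]mxE.
  by rewrite relu_clip //; exact: (u1_le n i h).
Qed.

Lemma clip_entry (b : R) : Num.max b 0 <= alpha -> `|Num.max b (- alpha)| <= alpha.
Proof.
move=> h; have a0 := alpha_ge0; rewrite ler_norml; apply/andP; split.
  by rewrite le_max lexx orbT.
move: h; rewrite !ge_max => /andP[h1 _]; rewrite h1 /=; lra.
Qed.

Lemma clip_Omega3 (z : zT) : Omega_theta X lam1 lam2 beta theta z ->
  Omega3 alpha (clip z).
Proof.
move=> h; rewrite /Omega3 /binf ge_max; apply/andP; split;
  apply: norminf_le; try exact: alpha_ge0; move=> i; rewrite mxE;
  apply: clip_entry.
- exact: P1.
- exact: P2.
Qed.

Lemma proj_ineq (b y a : R) : `|y| <= a ->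
  (b - Num.max b (- a)) ^+ 2 + (Num.max b (- a) - y) ^+ 2 <= (b - y) ^+ 2.
Proof.
rewrite ler_norml => /andP[h1 h2].
case: (leP (- a) b) => hb; nra.
Qed.

Lemma frob2_decomp m n (A C Y : 'M[R]_(m, n)) :
  (forall i j, (A i j - C i j) ^+ 2 + (C i j - Y i j) ^+ 2 <= (A i j - Y i j) ^+ 2) ->
  frob2 (A - C) + frob2 (C - Y) <= frob2 (A - Y).
Proof.
move=> h; rewrite /frob2 -big_split; apply: ler_sum => i _.
rewrite -big_split; apply: ler_sum => j _; rewrite !mxE; exact: h.
Qed.

Lemma frob2_eq0 m n (A B : 'M[R]_(m, n)) : frob2 (A - B) <= 0 -> A = B.
Proof.
move=> h; have e : frob2 (A - B) = 0 by apply: le_anti; rewrite h frob2_ge0.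
apply/matrixP => i j.
have e1 := psumr_eq0P (fun k _ => sumr_ge0 _ (fun l _ => sqr_ge0 ((A - B) k l))) e (i:=i) isT.
have e2 := psumr_eq0P (fun l _ => sqr_ge0 ((A - B) i l)) e1 (i:=j) isT.
by move: e2 => /eqP; rewrite sqrf_eq0 !mxE subr_eq0 => /eqP.
Qed.

Lemma Omega3_entry1 (y : zT) i : Omega3 alpha y -> `|zb1 y i 0| <= alpha.
Proof.
move=> h; apply: le_trans h; apply: le_trans (norminf_entry _ i) _.
by rewrite le_max lexx.
Qed.

Lemma Omega3_entry2 (y : zT) i : Omega3 alpha y -> `|zb2 y i 0| <= alpha.
Proof.
move=> h; apply: le_trans h; apply: le_trans (norminf_entry _ i) _.
by rewrite le_max lexx orbT.
Qed.

Lemma dist_decomp (z y : zT) : Omega3 alpha y ->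
  dist2 z (clip z) + dist2 (clip z) y <= dist2 z y.
Proof.
move=> hy; rewrite /dist2.
have hW : frob2 (zW z - zW (clip z)) + frob2 (zW (clip z) - zW y) <= frob2 (zW z - zW y).
  by apply: frob2_decomp => i j; rewrite /= subrr; nra.
have hV : frob2 (zV z - zV (clip z)) + frob2 (zV (clip z) - zV y) <= frob2 (zV z - zV y).
  by apply: frob2_decomp => i j; rewrite /= subrr; nra.
have h1 : frob2 (zb1 z - zb1 (clip z)) + frob2 (zb1 (clip z) - zb1 y) <= frob2 (zb1 z - zb1 y).
  apply: frob2_decomp => i j; rewrite /= mxE (ord1 j).
  by apply: proj_ineq; exact: Omega3_entry1.
have h2 : frob2 (zb2 z - zb2 (clip z)) + frob2 (zb2 (clip z) - zb2 y) <= frob2 (zb2 z - zb2 y).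
  apply: frob2_decomp => i j; rewrite /= mxE (ord1 j).
  by apply: proj_ineq; exact: Omega3_entry2.
lra.
Qed.

Lemma proj_is_clip (z zbar : zT) : Omega_theta X lam1 lam2 beta theta z ->
  is_proj_Omega3 alpha z zbar -> zbar = clip z.
Proof.
move=> h [h3 hmin].
have k1 := hmin _ (clip_Omega3 h).
have k2 := dist_decomp z h3.
have hd : dist2 (clip z) zbar <= 0 by lra.
move: hd; rewrite /dist2.
have := frob2_ge0 (zW (clip z) - zW zbar); have := frob2_ge0 (zV (clip z) - zV zbar).
have := frob2_ge0 (zb1 (clip z) - zb1 zbar); have := frob2_ge0 (zb2 (clip z) - zb2 zbar).
move=> g1 g2 g3 g4 hd.
have eW := @frob2_eq0 _ _ (zW (clip z)) (zW zbar) ltac:(lra).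
have eV := @frob2_eq0 _ _ (zV (clip z)) (zV zbar) ltac:(lra).
have e1 := @frob2_eq0 _ _ (zb1 (clip z)) (zb1 zbar) ltac:(lra).
have e2 := @frob2_eq0 _ _ (zb2 (clip z)) (zb2 zbar) ltac:(lra).
move: eW eV e1 e2; case: zbar {h3 hmin k1 k2 g1 g2 g3 g4 hd} => [[[W' b1'] b2'] V'] /=.
rewrite /clip /zW /zV /zb1 /zb2 /=.
by move=> <- <- <- <-.
Qed.

Lemma part_b (z zbar : zT) : Omega_theta X lam1 lam2 beta theta z ->
  is_proj_Omega3 alpha z zbar -> Zset X alpha zbar /\ O zbar = O z.
Proof.
move=> h hp; have e := proj_is_clip h hp.
split; last by rewrite e clip_obj.
split; last exact: hp.1.
by rewrite e; exact: clip_Omega2.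
Qed.

Definition z0 : zT := (0, 0, 0, 0).

Lemma pospart0 m n : pospart (0 : 'M[R]_(m, n)) = 0.
Proof. by apply/matrixP => i j; rewrite !mxE maxxx. Qed.

Lemma pz m n p (B : 'M[R]_(n, p)) : pospart ((0 : 'M[R]_(m, n)) *m B + 0) = 0.
Proof. by rewrite mul0mx addr0 pospart0. Qed.

Lemma O_z0 : O z0 = N%:R^-1 * frob2 X.
Proof.
rewrite /objO /objF /objR /objP.
have -> : zW z0 = 0 by []. have -> : zV z0 = 0 by [].
have -> : zb1 z0 = 0 by []. have -> : zb2 z0 = 0 by [].
rewrite trmx0.
under eq_bigr => n _ do rewrite pz.
under [in X in beta * X]eq_bigr => n _ do rewrite pz.
have -> : \sum_(n < N) \sum_(i < N1) (0 : 'M[R]_(N1, N)) i n = 0.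
  by apply: big1 => n _; apply: big1 => i _; rewrite mxE.
have -> : frob2 (0 : 'M[R]_(N1, N0)) = 0.
  by apply: big1 => n _; apply: big1 => i _; rewrite mxE expr0n.
have -> : \sum_(n < N) \sum_(i < N1) ((0 : 'M[R]_(N1, N)) i n - (0 : 'M[R]_(N1, 1)) i 0) = 0.
  by apply: big1 => n _; apply: big1 => i _; rewrite !mxE subrr.
rewrite !mulr0 !addr0; congr (_ * _).
rewrite /frob2 exchange_big /=; apply: eq_bigr => j _; apply: eq_bigr => n _.
by rewrite big_ord1 !mxE sub0r sqrrN.
Qed.

Lemma z0_Zset : Zset X alpha z0.
Proof.
split.
  move=> n i; rewrite /Omega2.
  have -> : zW z0 = 0 by []. have -> : zV z0 = 0 by [].
  have -> : zb1 z0 = 0 by [].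
  by rewrite mul0mx addr0 pospart0 !mxE.
rewrite /Omega3 /binf ge_max; apply/andP; split;
  apply: norminf_le; try exact: alpha_ge0; move=> i; rewrite mxE normr0;
  exact: alpha_ge0.
Qed.

Lemma z0_theta : O z0 < theta.
Proof. by rewrite O_z0. Qed.

Lemma LRP_theta (z : zT) : LRP_minimizer X lam1 lam2 beta alpha z ->
  Omega_theta X lam1 lam2 beta theta z.
Proof.
move=> [[h2 h3] hmin]; split => //.
exact: ltW (le_lt_trans (hmin _ z0_Zset) z0_theta).
Qed.

Lemma LRP_RP (z : zT) : LRP_minimizer X lam1 lam2 beta alpha z ->
  RP_minimizer X lam1 lam2 beta z.
Proof.
move=> hz; have [h2 hO] := LRP_theta hz; split => // y hy.
case: (leP (O y) theta) => hyt.
  have hyth : Omega_theta X lam1 lam2 beta theta y by [].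
  rewrite -(clip_obj hyth); apply: hz.2; split.
    exact: clip_Omega2.
  exact: clip_Omega3.
exact: ltW (le_lt_trans hO hyt).
Qed.

Definition Mbound : R :=
  frob2 (const_mx s : 'M[R]_(N1, N0)) + frob2 (const_mx alpha : 'cV[R]_N1)
  + frob2 (const_mx alpha : 'cV[R]_N0) + frob2 (const_mx (theta / lam1) : 'M[R]_(N1, N)).

Lemma LRP_bounded (z : zT) : LRP_minimizer X lam1 lam2 beta alpha z ->
  dist2 z 0 <= Mbound.
Proof.
move=> hz; have h := LRP_theta hz; have h3 := hz.1.2.
rewrite /dist2.
have -> : zW (0 : zT) = 0 by [].
have -> : zV (0 : zT) = 0 by [].
have -> : zb1 (0 : zT) = 0 by [].
have -> : zb2 (0 : zT) = 0 by [].
rewrite !subr0 /Mbound.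
have k1 : frob2 (zW z) <= frob2 (const_mx s : 'M[R]_(N1, N0)).
  by apply: frob2_le_const => i j; exact: Wentry.
have k2 : frob2 (zb1 z) <= frob2 (const_mx alpha : 'cV[R]_N1).
  by apply: frob2_le_const => i j; rewrite (ord1 j); exact: Omega3_entry1.
have k3 : frob2 (zb2 z) <= frob2 (const_mx alpha : 'cV[R]_N0).
  by apply: frob2_le_const => i j; rewrite (ord1 j); exact: Omega3_entry2.
have k4 : frob2 (zV z) <= frob2 (const_mx (theta / lam1) : 'M[R]_(N1, N)).
  apply: frob2_le_const => i j; rewrite ger0_norm; last exact: V_ge0 h.1 _ _.
  exact: V_bound.
lra.
Qed.

Local Notation KD := (((N1 * N0 + N1) + N0) + N1 * N)%N.

Lemma cO : continuous (fun v : 'rV[R]_KD => O (gmap v)).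
Proof.
rewrite /objO /objF /objR /objP.
apply: cD; first apply: cD.
- apply: cM; first exact: cC.
  apply: cSum => n; apply: cFrob; apply: mcB; last exact: mcC.
  apply: mcPos; apply: mcD; last exact: mcb2.
  by apply: mcMul; [apply: mcT; exact: mcW | apply: mcCol; exact: mcV].
- apply: cD; apply: cM; try exact: cC.
    by apply: cSum => n; apply: cSum => i; exact: mcV.
  apply: cFrob; exact: mcW.
- apply: cM; first exact: cC.
  apply: cSum => n; apply: cSum => i; apply: cD; first exact: mcV.
  apply: cN; apply: mcPos; apply: mcD; last exact: mcb1.
  by apply: mcMul; [exact: mcW | exact: mcC].
Qed.

Lemma closedC : closed [set v : 'rV[R]_KD | Zset X alpha (gmap v)].
Proof.
apply: (@closedI _ [set v | Omega2 X (gmap v)] [set v | Omega3 alpha (gmap v)]).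
  rewrite /Omega2; apply: closed_forall => n; apply: closed_forall => i.
  apply: closed_le_fun; last exact: mcV.
  apply: mcPos; apply: mcD; last exact: mcb1.
  by apply: mcMul; [exact: mcW | exact: mcC].
rewrite /Omega3 /binf; apply: closed_le_fun; last exact: cC.
by apply: cMax; apply: cNorminf; [exact: mcb1 | exact: mcb2].
Qed.

Let Bd := s + alpha + theta / lam1.

Lemma Bd_ge (z : zT) : Zset X alpha z -> O z <= theta ->
  forall k, `|fmap z ord0 k| <= Bd.
Proof.
move=> [h2 h3] hO; have h : Omega_theta X lam1 lam2 beta theta z by [].
have a0 := alpha_ge0; have t0 := th1_ge0; have s0 := s_ge0.
apply: fmap_bound.
- move=> i j; apply: le_trans (Wentry i j h) _; rewrite /Bd; lra.
- move=> i; apply: le_trans (Omega3_entry1 i h3) _; rewrite /Bd; lra.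
- move=> i; apply: le_trans (Omega3_entry2 i h3) _; rewrite /Bd; lra.
- move=> i j; rewrite ger0_norm; last exact: V_ge0 h2 _ _.
  apply: le_trans (V_bound i j h) _; rewrite /Bd; lra.
Qed.

Lemma LRP_exists : exists z : zT, LRP_minimizer X lam1 lam2 beta alpha z.
Proof.
pose Box := [set v : 'rV[R]_KD | forall i, `[- Bd, Bd]%classic (v ord0 i)].
pose Kset := Box `&` [set v : 'rV[R]_KD | Zset X alpha (gmap v)].
have inK : forall z : zT, Zset X alpha z -> O z <= theta -> Kset (fmap z).
  move=> z hz hO; split; last by rewrite /= gf.
  move=> i; have := Bd_ge hz hO i; rewrite ler_norml => /andP[l1 l2].
  by rewrite /= in_itv /= l1 l2.
have cK : compact Kset.
  apply: compact_closedI; last exact: closedC.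
  by apply: (@rV_compact _ _ (fun=> `[- Bd, Bd]%classic)) => i; exact: segment_compact.
have K0 : Kset !=set0.
  by exists (fmap z0); apply: inK; [exact: z0_Zset | exact: ltW z0_theta].
have [cc cK' hc] := compact_EVT_min K0 cK (continuous_subspaceT cO).
have cKs : Kset cc by rewrite inE in cK'.
exists (gmap cc); split; first exact: cKs.2.
move=> y hy.
have hcz0 : O (gmap cc) <= O z0.
  by rewrite -[X in _ <= O X](gf z0); apply: hc; rewrite inE; apply: inK; [exact: z0_Zset | exact: ltW z0_theta].
case: (leP (O y) theta) => hyt.
  by rewrite -(gf y); apply: hc; rewrite inE; apply: inK.
exact: ltW (le_lt_trans hcz0 (lt_trans z0_theta hyt)).
Qed.

Lemma main_in :
  let alpha := alpha_of N1 X lam1 lam2 theta in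
  let O := objO X lam1 lam2 beta in
  (forall z : zT, Omega_theta X lam1 lam2 beta theta z ->
     [/\ frob2 (zW z) <= theta / lam2,
         norm1 (zV z) <= theta / lam1,
         bposinf z <= alpha &
         forall zbar : zT, is_proj_Omega3 alpha z zbar ->
           Zset X alpha zbar /\ O zbar = O z])
  /\ (exists z : zT, LRP_minimizer X lam1 lam2 beta alpha z)
  /\ (exists M : R, forall z : zT, LRP_minimizer X lam1 lam2 beta alpha z ->
        dist2 z 0 <= M)
  /\ (forall z : zT, LRP_minimizer X lam1 lam2 beta alpha z ->
        RP_minimizer X lam1 lam2 beta z).
Proof.
move=> alpha O'; split.
  move=> z h; split.
  - exact: W_bound.
  - exact: norm1V.
  - exact: bpos_bound.
  - by move=> zbar hp; exact: part_b.
split; first exact: LRP_exists.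
split; first by exists Mbound => z hz; exact: LRP_bounded.
exact: LRP_RP.
Qed.
End Main.

Theorem theorem2p1 (R : realType) (N0 N1 N : nat)
  (X : 'M[R]_(N0, N)) (lam1 lam2 beta theta : R) :
  (0 < N)%N -> (0 < N0)%N -> (0 < N1)%N ->
  0 < lam1 -> 0 < lam2 -> 0 < beta ->
  N%:R^-1 * frob2 X < theta ->
  let alpha := alpha_of N1 X lam1 lam2 theta in
  let O := objO X lam1 lam2 beta in
  (forall z : zT R N0 N1 N, Omega_theta X lam1 lam2 beta theta z ->
     [/\ frob2 (zW z) <= theta / lam2,
         norm1 (zV z) <= theta / lam1,
         bposinf z <= alpha &
         forall zbar : zT R N0 N1 N, is_proj_Omega3 alpha z zbar ->
           Zset X alpha zbar /\ O zbar = O z])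
  /\ (exists z : zT R N0 N1 N, LRP_minimizer X lam1 lam2 beta alpha z)
  /\ (exists M : R, forall z : zT R N0 N1 N, LRP_minimizer X lam1 lam2 beta alpha z ->
        dist2 z 0 <= M)
  /\ (forall z : zT R N0 N1 N, LRP_minimizer X lam1 lam2 beta alpha z ->
        RP_minimizer X lam1 lam2 beta z).
Proof.
move=> HN HN0 HN1 Hl1 Hl2 Hb Hth.
exact: (main_in HN HN0 HN1 Hl1 Hl2 Hb Hth).
Qed.
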